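(* Let $K_\infty=s_1s_2s_3\dots$ be the fixed point beginning with $1$ of the substitution $1\mapsto10$, $0\mapsto11$, let $t_k=\sum_{i=1}^k s_i\pmod 2$ and $\tau_\infty=\sum_{k\ge1}t_k2^{-k}$. Then the digits $0$ and $1$ each occur in the sequence $t_1t_2t_3\dots$ with asymptotic frequency $1/2$, but $\tau_\infty$ is not a normal number in base $2$ (i.e. it is not true that every binary word of length $n$ occurs in $t_1t_2\dots$ with asymptotic frequency $2^{-n}$ for all $n$). *)

(* Defs.v *)
From mathcomp Require Import all_boot.
From Stdlib Require Import Reals.

Definition subst1 (b : bool) : seq bool :=
  if b then [:: true; false] else [:: true; true].
Definition subst (w : seq bool) : seq bool := flatten (map subst1 w).

(* K_infty = lim subst^n [1]; the word subst^(i+1) [1] has length 2^(i+1) > i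
   and is a prefix of the fixed point beginning with 1.
   s i  =  s_{i+1}  (0-indexed). *)
Definition s (i : nat) : bool := nth false (iter i.+1 subst [:: true]) i.

(* t k = t_{k+1} = (s_1 + ... + s_{k+1}) mod 2  (0-indexed). *)
Definition t (k : nat) : bool := odd (\sum_(i < k.+1) (s i : nat)).

(* tau_infty = sum_{k>=1} t_k 2^{-k}: its binary digit sequence is t,
   so normality of tau_infty is stated as normality of t. *)
Definition tau_infty_partial (N : nat) : R :=
  sum_f_R0 (fun k => ((if t k then 1 else 0) / 2 ^ k.+1)%R) N.

Definition occ_count (w : seq bool) (N : nat) : nat :=
  count (fun k => [seq t (k + j) | j <- iota 0 (size w)] == w) (iota 0 N).

Definition has_freq (w : seq bool) (l : R) : Prop :=
  Un_cv (fun N => (INR (occ_count w N) / INR N)%R) l.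

Definition t_normal : Prop :=
  forall (n : nat) (w : seq bool), size w = n -> has_freq w (/ 2 ^ n)%R.

(* Main.v *)
Require Import Defs.
From mathcomp Require Import all_boot.
From Stdlib Require Import Reals Lra.

Lemma size_subst w : size (subst w) = (size w).*2.
Proof. by elim: w => //= b w IH; rewrite /subst /= size_cat -/(subst w) IH; case: b. Qed.

Lemma nth_subst_even w j : nth false (subst w) j.*2 = (j < size w).
Proof.
elim: w j => [|b w IH] [|j] //=; rewrite /subst /= -/(subst w); case: b => //=;
  by rewrite doubleS /= IH.
Qed.

Lemma size_iter n : size (iter n subst [:: true]) = expn 2 n.
Proof. elim: n => //= n IH; by rewrite size_subst IH -muln2 expnS mulnC. Qed.

Lemma s_even m : s m.*2 = true.
Proof.
rewrite /s /= nth_subst_even size_iter.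
have h1 : m <= m.*2 by rewrite -addnn leq_addr.
have h2 : m.*2 < expn 2 m.*2 by apply: ltn_expl.
exact: leq_ltn_trans h1 h2.
Qed.

Lemma t_succ k : t k.+1 = t k (+) s k.+1.
Proof. by rewrite /t big_ord_recr /= oddD; case: (s k.+1). Qed.

Lemma t_odd m : t (m.*2.+2) = ~~ t (m.*2.+1).
Proof. by rewrite t_succ -doubleS s_even addbT. Qed.

From mathcomp Require Import zify.

Lemma occ1 d N : occ_count [:: d] N = count (fun k => t k == d) (iota 0 N).
Proof. by rewrite /occ_count; apply: eq_count => k /=; rewrite addn0 eqseq_cons andbT. Qed.

Lemma cnt_odd d M : count (fun k => t k == d) (iota 0 (M.*2.+1)) = M + (t 0 == d).
Proof.
elim: M => [|M IH]; first by rewrite /= addn0.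
have -> : (M.+1).*2.+1 = M.*2.+1 + 2 by rewrite doubleS; lia.
rewrite iotaD count_cat IH /= add0n t_odd.
by move: IH; case: (t M.*2.+1); case: (t 0); case: d => /= _; lia.
Qed.

Lemma cnt_bounds d N : let c := count (fun k => t k == d) (iota 0 N) in
  N <= c.*2 + 2 /\ c.*2 <= N + 2.
Proof.
rewrite /=.
have [N0|] := posnP N; first by rewrite N0.
rewrite -(odd_double_half N) => _.
case: (odd N); rewrite ?add1n ?add0n.
  rewrite cnt_odd; case: (t 0 == d) => /=; lia.

case: (N./2) => [|M]; first by [].
have -> : M.+1.*2 = M.*2.+1 + 1 by rewrite doubleS; lia.
rewrite iotaD count_cat cnt_odd /=.
by case: (t 0 == d); case: (t M.*2.+1 == d) => /=; lia.
Qed.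

Lemma no000 N : occ_count [:: false; false; false] N = 0.
Proof.
have H : forall k, ([seq t (k+j) | j <- iota 0 3] == [:: false; false; false]) = false.
  move=> k /=; rewrite !eqseq_cons andbT !addnS addn0.
  rewrite -(odd_double_half k); case: (odd k) => /=.
    by rewrite add1n t_odd; case: (t k./2.*2.+1).
  by rewrite add0n t_odd; case: (t k./2.*2.+1); rewrite ?andbF.
by rewrite /occ_count (eq_count (a2 := pred0) H) count_pred0.
Qed.

Lemma INRD a b : INR (a + b)%N = (INR a + INR b)%R.
Proof. exact: plus_INR. Qed.

Lemma freq_half d : has_freq [:: d] (1 / 2)%R.
Proof.
intros eps Heps.
destruct (archimed_cor1 (eps/2)%R) as [N [HN HN0]]; first lra.
exists N => n Hn.
rewrite occ1.
destruct (cnt_bounds d n) as [B1 B2].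
set c := count _ _ in B1 B2 *.
move/leP: B1 => B1; move/leP: B2 => B2.
have R1 := le_INR _ _ B1; have R2 := le_INR _ _ B2.
rewrite !INRD -addnn INRD in R1 R2.
have Hn' := le_INR _ _ Hn.
have HN1 : (0 < INR N)%R by apply: lt_0_INR.
have HI : (INR N * / INR N = 1)%R by apply: Rinv_r; lra.
have Hne : (INR n * eps > 2)%R by nra.
have Hnp : (0 < INR n)%R by lra.
set x := (INR c / INR n)%R.
have Hx : INR c = (x * INR n)%R by rewrite /x; field; lra.
rewrite Hx in R1 R2.
simpl in R1, R2.
unfold R_dist; apply: Rabs_def1; nra.
Qed.

Theorem mainTheorem10 :
  (forall d : bool, has_freq [:: d] (1 / 2)%R) /\ ~ t_normal.
Proof.
split; first exact: freq_half.
move=> H.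
have := H 3 [:: false; false; false] erefl.
move=> /(_ (/16)%R) [].
  lra.
move=> N HN.
have := HN N (le_n N).
rewrite no000 /R_dist /= Rdiv_0_l Rminus_0_l Rabs_Ropp Rabs_pos_eq; lra.
Qed.
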